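(* Let $R$ be a rack, $X$ an $R$-set and $p:X\to R$ a map with $p(x\cdot r)=p(x)\lhd r$ for all $x,r$ (i.e. a crossed module of racks $p:X\to R$). Let $N_X(R)$ and $N_R(R)$ be the cubical nerves defined below, and $p_*:N_X(R)\to N_R(R)$ the map $(x,r_1,\dots,r_n)\mapsto(p(x),r_1,\dots,r_n)$. Suppose that the rack space $B_R(R)=|N_R(R)|$ is arcwise connected and locally arcwise connected. Then the geometric realization $|p_*|:B_X(R)\to B_R(R)$ is a covering map of topological spaces.
   Context: A (right) rack is a set with a binary operation $\lhd$ such that each $x\mapsto x\lhd y$ is bijective and $(x\lhd y)\lhd z=(x\lhd z)\lhd(y\lhd z)$. An action of a rack $R$ on a set $Y$ is a family of bijections $y\mapsto y\cdot r$ with $(y\cdot r)\cdot r'=(y\cdot r')\cdot(r\lhd r')$. For such an action, the cubical set ($\Box$-set, no degeneracies) $N_Y(R)$ has as $n$-cubes the tuples $(y,r_1,\dots,r_n)\in Y\times R^n$, with face maps $\partial_i^0(y,r_1,\dots,r_n)=(y,r_1,\dots,\widehat{r_i},\dots,r_n)$ and $\partial_i^1(y,r_1,\dots,r_n)=(y\cdot r_i,\,r_1\lhd r_i,\dots,r_{i-1}\lhd r_i,\,r_{i+1},\dots,r_n)$ for $1\le i\le n$ (its 1-skeleton with 2-cubes as preferred squares is the action rack trunk: edges $y\xrightarrow{r}y\cdot r$). Its geometric realization $B_Y(R)=|N_Y(R)|=\big(\bigsqcup_n N_Y(R)_n\times[0,1]^n\big)/\!\sim$, glued along the face maps, is the rack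 space. $N_R(R)$ is the case $Y=R$ with $R$ acting on itself by $r\cdot r'=r\lhd r'$. *)

(* Defs.v *)
From HB Require Import structures.
From Stdlib Require Import Relation_Operators.
From mathcomp Require Import all_boot all_order all_algebra generic_quotient.
From mathcomp Require Import all_classical all_reals all_analysis.
Import Order.TTheory GRing.Theory Num.Theory.
Import numFieldNormedType.Exports.

Set Implicit Arguments.
Unset Strict Implicit.
Unset Printing Implicit Defensive.

Local Open Scope classical_set_scope.
Local Open Scope ring_scope.
Local Open Scope quotient_scope.

Definition is_rack {R : Type} (op : R -> R -> R) : Prop :=
  (forall y : R, bijective (fun x => op x y)) /\
  (forall x y z : R, op (op x y) z = op (op x z) (op y z)).

Definition is_rack_action {R Y : Type} (op : R -> R -> R) (act : Y -> R -> Y)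
  : Prop :=
  (forall r : R, bijective (fun y => act y r)) /\
  (forall (y : Y) (r r' : R), act (act y r) r' = act (act y r') (op r r')).

Section Nerve.
Context (K : realType) (Y R : Type) (act : Y -> R -> Y) (op : R -> R -> R).

Definition cells := {n : nat & (Y * n.-tuple R)%type}.
HB.instance Definition _ := gen_eqMixin cells.
HB.instance Definition _ := gen_choiceMixin cells.

(** face maps (0-based index i : 'I_n.+1 standing for the paper's i+1);
    e = false is d^0_i, e = true is d^1_i *)
Definition face (n : nat) (c : Y * (n.+1).-tuple R) (i : 'I_n.+1) (e : bool)
  : cells :=
  existT _ n
    (if e then
       (act c.1 (tnth c.2 i),
        [tuple if (j < i)%N then op (tnth c.2 (lift i j)) (tnth c.2 i)
               else tnth c.2 (lift i j) | j < n])
     else (c.1, [tuple tnth c.2 (lift i j) | j < n])).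

Definition cube (n : nat) : set 'rV[K]_n :=
  [set t | forall i : 'I_n, 0 <= t ord0 i <= 1].
Arguments cube : clear implicits.
Definition cubeT (n : nat) := set_type (cube n).

Definition coface (n : nat) (i : 'I_n.+1) (e : bool) (t : 'rV[K]_n)
  : 'rV[K]_n.+1 :=
  \row_k (match unlift i k with Some j => t ord0 j | None => (e : nat)%:R end).

(** disjoint union of N_Y(R)_n x [0,1]^n over all n
    (topologically: disjoint sum of the cubes, one per cell) *)
Definition tot := {c : cells & cubeT (projT1 c)}.

Definition face_rel (a b : tot) : Prop :=
  exists (n : nat) (c : Y * (n.+1).-tuple R) (i : 'I_n.+1) (e : bool)
         (ta : cubeT n) (tb : cubeT n.+1),
    a = existT _ (face c i e) ta /\
    b = existT (fun c => cubeT (projT1 c)) (existT _ n.+1 c) tb /\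
    set_val tb = coface i e (set_val ta).

Definition glue_rel (a b : tot) : bool :=
  `[< clos_refl_sym_trans tot face_rel a b >].

Lemma glue_rel_refl : reflexive glue_rel.
Proof. by move=> a; apply/asboolP; apply: rst_refl. Qed.

Lemma glue_rel_sym : symmetric glue_rel.
Proof.
by move=> a b; apply/asboolP/asboolP => H; apply: rst_sym.
Qed.

Lemma glue_rel_trans : transitive glue_rel.
Proof.
by move=> b a c /asboolP H1 /asboolP H2; apply/asboolP; apply: rst_trans H2.
Qed.

Definition glue_equiv := EquivRel glue_rel glue_rel_refl glue_rel_sym
  glue_rel_trans.

Definition realization := {eq_quot glue_equiv}.
HB.instance Definition _ := Topological.copy realization
  (quotient_topology realization).
HB.instance Definition _ := Quotient.on realization.

End Nerve.

(** B_R(R) is [realization K op op] (R acting on itself by op). *)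

Section Realized_map.
Context (K : realType) (X Y R : Type) (actX : X -> R -> X) (actY : Y -> R -> Y)
  (op : R -> R -> R) (p : X -> Y).

Definition cells_map (c : cells X R) : cells Y R :=
  existT _ (projT1 c) (p (projT2 c).1, (projT2 c).2).

Definition tot_map (t : tot K X R) : tot K Y R :=
  existT (fun c => cubeT K (projT1 c)) (cells_map (projT1 t)) (projT2 t).

Definition realization_map (q : realization K actX op) : realization K actY op :=
  \pi_(realization K actY op) (tot_map (repr q)).

End Realized_map.
Arguments realization_map K {X Y R} actX actY op p q.

Section Topo.
Context (K : realType).

Definition path_in {T : topologicalType} (A : set T) (x y : T) : Prop :=
  exists f : K -> T, {within `[0, 1], continuous f} /\
    f 0 = x /\ f 1 = y /\ f @` `[0, 1] `<=` A.

Definition arcwise_connected_set {T : topologicalType} (A : set T) : Prop :=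
  forall x y, A x -> A y -> path_in A x y.

Definition arcwise_connected (T : topologicalType) : Prop :=
  arcwise_connected_set (@setT T).

Definition locally_arcwise_connected (T : topologicalType) : Prop :=
  forall (x : T) (U : set T), nbhs x U ->
    exists V : set T, nbhs x V /\ V `<=` U /\ arcwise_connected_set V.
End Topo.

Definition homeo_onto {E B : topologicalType} (f : E -> B) (A : set E)
  (U : set B) : Prop :=
  {within A, continuous f} /\
  exists g : B -> E,
    (forall a, A a -> U (f a) /\ g (f a) = a) /\
    (forall u, U u -> A (g u) /\ f (g u) = u) /\
    {within U, continuous g}.

Definition evenly_covered {E B : topologicalType} (f : E -> B) (U : set B)
  : Prop :=
  exists V : set (set E),
    (forall A, V A -> open A) /\
    (forall A A', V A -> V A' -> A `&` A' !=set0 -> A = A') /\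
    f @^-1` U = \bigcup_(A in V) A /\
    (forall A, V A -> homeo_onto f A U).

(** covering map (fibres allowed to be empty, as in Hatcher) *)
Definition covering_map {E B : topologicalType} (f : E -> B) : Prop :=
  continuous f /\
  forall b : B, exists U : set B, open U /\ U b /\ evenly_covered f U.

(* Main.v *)
Require Import Defs.
From HB Require Import structures.
From Stdlib Require Import Relation_Operators.
From mathcomp Require Import all_boot all_order all_algebra generic_quotient.
From mathcomp Require Import all_classical all_reals all_analysis.
From mathcomp Require Import zify ring lra.
Set Implicit Arguments.
Unset Strict Implicit.
Unset Printing Implicit Defensive.

Section MF.
Context {Y R : Type} (act : Y -> R -> Y) (op : R -> R -> R).

Fixpoint ones (s : seq R) (pat : seq (option bool)) : seq R :=
  match s, pat with
  | r :: s', Some true :: p' => r :: ones s' p'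
  | r :: s', _ :: p' => ones s' p'
  | _, _ => [::]
  end.

Fixpoint mf2 (s : seq R) (pat : seq (option bool)) : seq R :=
  match s, pat with
  | r :: s', None :: p' => foldl op r (ones s' p') :: mf2 s' p'
  | r :: s', _ :: p' => mf2 s' p'
  | _, _ => [::]
  end.

Definition mf1 (y : Y) s pat := foldl act y (ones s pat).

Lemma ones_cat sa sb pa pb : size sa = size pa ->
  ones (sa ++ sb) (pa ++ pb) = ones sa pa ++ ones sb pb.
Proof.
elim: sa pa => [|r sa IH] [|[[]|] pa] //= [] /IH -> //.
Qed.

Lemma ones_map f sa pa : ones (map f sa) pa = map f (ones sa pa).
Proof. by elim: sa pa => [|r sa IH] [|[[]|] pa] //=; rewrite IH. Qed.

Lemma size_mf2 s pat : size s = size pat -> size (mf2 s pat) = count_mem None pat.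
Proof. by elim: s pat => [|r s IH] [|[[]|] pa] //= [] /IH ->. Qed.

Hypothesis actA : forall y r r', act (act y r) r' = act (act y r') (op r r').

Lemma foldl_act_shift (l : seq R) y r :
  act (foldl act y l) r = foldl act (act y r) (map (op^~ r) l).
Proof. by elim: l y => [|a l IH] y //=; rewrite IH actA. Qed.

End MF.

Section MF2.
Context {Y R : Type} (act : Y -> R -> Y) (op : R -> R -> R).
Hypothesis actA : forall y r r', act (act y r) r' = act (act y r') (op r r').
Hypothesis opA : forall x y z, op (op x y) z = op (op x z) (op y z).

Definition fc1 (y : Y) (r : R) (e : bool) := if e then act y r else y.
Definition fc2 (sa : seq R) (r : R) (e : bool) := if e then map (op^~ r) sa else sa.

Lemma mf1_face sa sb r pa pb e y : size sa = size pa ->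
  mf1 act y (sa ++ r :: sb) (pa ++ Some e :: pb) =
  mf1 act (fc1 y r e) (fc2 sa r e ++ sb) (pa ++ pb).
Proof.
move=> Hs; rewrite /mf1 !ones_cat //; last by case: (e); rewrite //= size_map.
case: e => /=; last by [].
by rewrite ones_map foldl_cat /= (foldl_act_shift actA) foldl_cat.
Qed.

Lemma mf2_face sa sb r pa pb e : size sa = size pa ->
  mf2 op (sa ++ r :: sb) (pa ++ Some e :: pb) =
  mf2 op (fc2 sa r e ++ sb) (pa ++ pb).
Proof.
elim: sa pa => [|a sa IH] [|o pa] //=.
- by move=> _; case: e.
- move=> [] Hs.
  have -> : (fc2 (a :: sa) r e) = (if e then op a r else a) :: fc2 sa r e by case: (e).
  case: o => [[]|] /=; rewrite ?IH //.
  rewrite ones_cat // ones_cat; last by case: (e); rewrite //= size_map.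
  case: (e) => //=; rewrite ones_map foldl_cat /= foldl_cat.
  by rewrite (foldl_act_shift opA).
Qed.

End MF2.

Import Order.TTheory GRing.Theory Num.Theory numFieldNormedType.Exports.
Local Open Scope classical_set_scope.
Local Open Scope ring_scope.

Definition ins {T : Type} (i : nat) (x : T) (u : seq T) := take i u ++ x :: drop i u.

Lemma nth_ins {T : Type} (d : T) i x u k : (i <= size u)%N ->
  nth d (ins i x u) k = if (k < i)%N then nth d u k else if k == i then x else nth d u k.-1.
Proof.
move=> hi; rewrite /ins nth_cat size_take_min (minn_idPl hi).
case: ltnP => hk; first by rewrite nth_take.
case: eqVneq => [->|hne]; first by rewrite subnn.
have hk' : (i < k)%N by rewrite ltn_neqAle eq_sym hne.
case: k hk hne hk' => [|k] hk hne hk'; first by [].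
rewrite subSn // /= nth_drop; congr nth; lia.
Qed.

Lemma map_ins {T U : Type} (f : T -> U) i x u : map f (ins i x u) = ins i (f x) (map f u).
Proof. by rewrite /ins map_cat /= map_take map_drop. Qed.

Lemma size_ins {T : Type} i (x : T) u : (i <= size u)%N -> size (ins i x u) = (size u).+1.
Proof. by move=> hi; rewrite /ins size_cat /= size_take_min size_drop (minn_idPl hi) addnS subnKC. Qed.

Section Vals.
Context (K : realType).

Definition vals n (t : 'rV[K]_n) : seq K := [seq t ord0 k | k <- enum 'I_n].

Lemma size_vals n (t : 'rV[K]_n) : size (vals t) = n.
Proof. by rewrite size_map size_enum_ord. Qed.

Lemma nth_vals n (t : 'rV[K]_n) (k : 'I_n) : nth 0 (vals t) k = t ord0 k.
Proof. by rewrite (nth_map k) ?size_enum_ord // nth_ord_enum. Qed.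

Lemma vals_coface n (i : 'I_n.+1) (e : bool) (t : 'rV[K]_n) :
  vals (coface i e t) = ins i (e%:R) (vals t).
Proof.
have hi : (i <= size (vals t))%N by rewrite size_vals -ltnS.
apply: (@eq_from_nth _ 0); first by rewrite size_ins // !size_vals.
move=> k; rewrite size_vals => hk.
rewrite (nth_vals _ (Ordinal hk)) nth_ins // /coface mxE.
case: unliftP => [j|] /= hkj.
  have -> : k = bump i j by move: hkj => /(congr1 val).
  rewrite /bump; case: (leqP i j) => hij.
    change (nat_of_bool true) with 1%N; rewrite add1n ifF; last by apply/negbTE; rewrite -leqNgt; lia.
    rewrite ifF; last by apply/negbTE/eqP; lia.
    by rewrite /= (nth_vals _ j).
  by change (nat_of_bool false) with 0%N; rewrite add0n hij (nth_vals _ j).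
by move: hkj => /(congr1 val) /= ->; rewrite ltnn eqxx.
Qed.

End Vals.

Section Cls.
Context (K : realType) (eps : K).

Definition cls (v : K) : option bool :=
  if v < eps then Some false else if 1 - eps < v then Some true else None.

Fixpoint tg (pat : seq (option bool)) (ts : seq K) : seq K :=
  match pat with
  | [::] => [::]
  | None :: p => head 0 ts :: tg p (behead ts)
  | Some b :: p => (b%:R) :: tg p ts
  end.

Definition closeseq (u v : seq K) :=
  forall k, (k < size u)%N -> `|nth 0 u k - nth 0 v k| < eps.

Lemma size_tg pat ts : size (tg pat ts) = size pat.
Proof. by elim: pat ts => [|[b|] p IH] ts //=; rewrite IH. Qed.

Lemma tg_ins i e pat ts : (i <= size pat)%N ->
  tg (ins i (Some e) pat) ts = ins i (e%:R) (tg pat ts).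
Proof.
elim: pat i ts => [|o p IH] [|i] ts hi //=; rewrite /ins ?take0 ?drop0 //.
rewrite [take _ _]/= [drop _ _]/= -!/(ins _ _ _).
by case: o hi => [b|] /= hi; rewrite IH.
Qed.

Hypothesis eps_gt0 : 0 < eps.
Hypothesis eps_le : eps <= 4^-1.

Lemma cls_nat (e : bool) : cls (e%:R) = Some e.
Proof.
have he0 := eps_gt0; have he1 := eps_le.
case: e; rewrite /cls /= ?mulr1n ?mulr0n.
  have -> : (1 < eps) = false by apply/negbTE/negP => h; lra.
  by have -> : (1 - eps < 1) = true by apply/idP; lra.
by rewrite eps_gt0.
Qed.

Lemma closeseq_ins i (a b : K) (u v : seq K) : (i <= size u)%N -> size u = size v ->
  `|a - b| < eps -> closeseq (ins i a u) (ins i b v) <-> closeseq u v.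
Proof.
move=> hi huv hab; have hi' : (i <= size v)%N by rewrite -huv.
split => H k hk.
- case: (ltnP k i) => hki.
    have := H k; rewrite size_ins // !nth_ins // hki; apply; lia.
  have := H k.+1; rewrite size_ins // !nth_ins //.
  have -> : (k.+1 < i)%N = false by apply/negbTE; lia.
  have -> : (k.+1 == i) = false by apply/negbTE/eqP; lia.
  by apply.
- rewrite size_ins // in hk; rewrite !nth_ins //.
  case: ltnP => hki; first by apply: H; lia.
  case: eqP => // hne; apply: H; lia.
Qed.

Lemma classify_close pat u ts :
  all (fun x => (2 * eps < x) && (x < 1 - 2 * eps)) ts ->
  size pat = size u -> (count_mem None pat <= size ts)%N ->
  closeseq u (tg pat ts) -> map cls u = pat.
Proof.
have he0 := eps_gt0; have he1 := eps_le.
elim: pat u ts => [|o p IH] [|v u] ts //= hts [] hs hc H.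
have H0 := H 0%N isT; rewrite /= in H0.
have Hr : closeseq u (tg p (if o is None then behead ts else ts)).
  by move=> k hk; case: o H H0 hc => [b|] H _ _; exact: (H k.+1).
case: o H H0 hc Hr => [b|] _ H0 hc Hr.
  rewrite (IH u ts) //; congr (_ :: _).
  clear hc Hr hs.
  move: H0; rewrite /cls; case: b => /= H0.
    rewrite ifF; last by apply/negbTE; rewrite -leNgt; move: H0; rewrite ltr_norml; lra.
    by rewrite ifT //; move: H0; rewrite ltr_norml; lra.
  by rewrite ifT //; move: H0; rewrite subr0 ltr_norml; lra.
case: ts hts hc H0 Hr => [|x ts] //= /andP [/andP [hx1 hx2] hts] hc H0 Hr.
rewrite (IH u ts) //; congr (_ :: _).
move: H0; rewrite ltr_norml /cls => /andP [h1 h2].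
rewrite ifF; last by apply/negbTE; rewrite -leNgt; lra.
by rewrite ifF //; apply/negbTE; rewrite -leNgt; lra.
Qed.

Definition interiorb (v : K) := (0 < v) && (v < 1).


End Cls.

Lemma exists_eps (K : realType) (u : seq K) : exists eps : K, 0 < eps /\ eps <= 4^-1 /\
  forall v, v \in u -> 0 < v -> v < 1 -> 2 * eps < v /\ v < 1 - 2 * eps.
Proof.
elim: u => [|a u [e [he0 [he1 H]]]]; first by exists 4^-1; split => //.
case: (boolP ((0 < a) && (a < 1))) => [/andP [a0 a1]|ha].
  exists (Num.min e (Num.min (a / 4) ((1 - a) / 4))).
  split; first by rewrite !lt_min he0 /=; apply/andP; split; lra.
  split; first by rewrite ge_min he1.
  move=> v; rewrite in_cons => /orP [/eqP ->|hv] v0 v1.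
    have h1 : Num.min e (Num.min (a / 4) ((1 - a) / 4)) <= a / 4 by rewrite !ge_min lexx orbT.
    have h2 : Num.min e (Num.min (a / 4) ((1 - a) / 4)) <= (1 - a) / 4 by rewrite !ge_min lexx !orbT.
    split; lra.
  have := H v hv v0 v1; have h1 : Num.min e (Num.min (a / 4) ((1 - a) / 4)) <= e by rewrite ge_min lexx.
  move=> [? ?]; split; lra.
exists e; split => //; split => // v; rewrite in_cons => /orP [/eqP ->|hv] v0 v1.
  by move: ha; rewrite v0 v1.
exact: H.
Qed.

Local Open Scope quotient_scope.

Lemma face_tuple_true {R : Type} (op : R -> R -> R) n (s : (n.+1).-tuple R) (i : 'I_n.+1) :
  val [tuple if (j < i)%N then op (tnth s (lift i j)) (tnth s i)
             else tnth s (lift i j) | j < n]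
  = fc2 op (take i s) (tnth s i) true ++ drop i.+1 s.
Proof.
set x0 := tnth s i.
have hi : (i <= n)%N by rewrite -ltnS.
apply: (@eq_from_nth _ x0).
  by rewrite size_tuple size_cat /= size_map size_take size_drop size_tuple ltnS hi; lia.
move=> k; rewrite size_tuple => hk.
rewrite -(tnth_nth x0 _ (Ordinal hk)) tnth_mktuple /=.
rewrite nth_cat size_map size_take size_tuple ltnS hi.
rewrite !(tnth_nth x0) /= /bump.
case: ltnP => hki.
  by rewrite (nth_map x0) ?size_take ?size_tuple ?ltnS ?hi // nth_take // leqNgt hki.
by rewrite nth_drop; congr nth; change (nat_of_bool true) with 1%N; lia.
Qed.

Lemma face_tuple_false {R : Type} n (s : (n.+1).-tuple R) (i : 'I_n.+1) :
  val [tuple tnth s (lift i j) | j < n] = take i s ++ drop i.+1 s.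
Proof.
set x0 := tnth s i.
have hi : (i <= n)%N by rewrite -ltnS.
apply: (@eq_from_nth _ x0).
  by rewrite size_tuple size_cat size_take size_drop size_tuple ltnS hi; lia.
move=> k; rewrite size_tuple => hk.
rewrite -(tnth_nth x0 _ (Ordinal hk)) tnth_mktuple /=.
rewrite nth_cat size_take size_tuple ltnS hi.
rewrite !(tnth_nth x0) /= /bump.
case: ltnP => hki.
  by rewrite nth_take // leqNgt hki.
by rewrite nth_drop; congr nth; change (nat_of_bool true) with 1%N; lia.
Qed.

Lemma rst_eq {T U : Type} (rel : T -> T -> Prop) (f : T -> U) :
  (forall a b, rel a b -> f a = f b) ->
  forall a b, clos_refl_sym_trans T rel a b -> f a = f b.
Proof.
move=> H a b; elim.
- by move=> ? ? /H.
- by [].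
- by move=> ? ? _ ->.
- by move=> ? ? ? _ -> _ ->.
Qed.

Lemma rst_map {T U : Type} (relT : T -> T -> Prop) (relU : U -> U -> Prop) (f : T -> U) :
  (forall a b, relT a b -> relU (f a) (f b)) ->
  forall a b, clos_refl_sym_trans T relT a b -> clos_refl_sym_trans U relU (f a) (f b).
Proof.
move=> H a b; elim.
- by move=> ? ? /H; apply: rst_step.
- by move=> ?; apply: rst_refl.
- by move=> ? ? _; apply: rst_sym.
- by move=> ? ? ? _ h1 _ h2; apply: rst_trans h2.
Qed.

Section Gen.
Context (K : realType) (Y R : Type) (act : Y -> R -> Y) (op : R -> R -> R).

Definition cy (a : tot K Y R) : Y := (projT2 (projT1 a)).1.
Definition cs (a : tot K Y R) : seq R := val (projT2 (projT1 a)).2.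
Definition ct (a : tot K Y R) : seq K := vals (set_val (projT2 a)).

Lemma size_cs a : size (cs a) = projT1 (projT1 a).
Proof. by rewrite /cs size_tuple. Qed.

Lemma size_ct a : size (ct a) = projT1 (projT1 a).
Proof. by rewrite /ct size_vals. Qed.

Lemma face_data_of n (c : Y * (n.+1).-tuple R) (i : 'I_n.+1) (e : bool)
  (ta : cubeT K n) (tb : cubeT K n.+1) :
  set_val tb = coface i e (set_val ta) ->
  let a := existT (fun c => cubeT K (projT1 c)) (face act op c i e) ta in
  let b := existT (fun c => cubeT K (projT1 c)) (existT _ n.+1 c) tb in
  [/\ cs b = take i (val c.2) ++ tnth c.2 i :: drop i.+1 (val c.2),
      cy a = fc1 act (cy b) (tnth c.2 i) e,
      cs a = fc2 op (take i (val c.2)) (tnth c.2 i) e ++ drop i.+1 (val c.2),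
      ct b = ins (size (take i (val c.2))) e%:R (ct a) &
      (size (take i (val c.2)) <= size (ct a))%N].
Proof.
move=> htb a b.
have hi : (i <= n)%N by rewrite -ltnS.
have hsa : size (take i (val c.2)) = i by rewrite size_take size_tuple ltnS hi.
split.
- rewrite /cs /= -{1}(cat_take_drop i (val c.2)) (drop_nth (tnth c.2 i)) ?size_tuple //.
  by rewrite -tnth_nth.
- by rewrite /a; case: (e).
- by rewrite /a; case: (e); rewrite /cs; [exact: face_tuple_true | exact: face_tuple_false].
- by rewrite /ct /= htb vals_coface hsa.
- by rewrite hsa size_ct.
Qed.

Lemma face_data a b : face_rel act op a b -> exists (sa sb : seq R) (r : R) (e : bool),
  [/\ cs b = sa ++ r :: sb, cy a = fc1 act (cy b) r e, cs a = fc2 op sa r e ++ sb,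
      ct b = ins (size sa) e%:R (ct a) & (size sa <= size (ct a))%N].
Proof.
move=> [n [c [i [e [ta [tb [-> [-> htb]]]]]]]].
by exists (take i (val c.2)), (drop i.+1 (val c.2)), (tnth c.2 i), e; apply: face_data_of.
Qed.

Lemma pi_eqP (a b : tot K Y R) :
  \pi_(realization K act op) a = \pi_(realization K act op) b <->
  clos_refl_sym_trans _ (face_rel act op) a b.
Proof.
split => [/eqmodP /asboolP //|h].
by apply/eqmodP/asboolP.
Qed.

Lemma repr_rel (a : tot K Y R) :
  clos_refl_sym_trans _ (face_rel act op) (repr (\pi_(realization K act op) a)) a.
Proof. by apply/pi_eqP; rewrite reprK. Qed.

End Gen.

Section Sat.
Context (K : realType) (R : Type) (op : R -> R -> R).
Hypothesis opA : forall x y z, op (op x y) z = op (op x z) (op y z).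
Context (eps : K) (ts : seq K).
Hypothesis eps_gt0 : 0 < eps.
Hypothesis eps_le : eps <= 4^-1.

Definition pat {Y : Type} (a : tot K Y R) := map (cls eps) (ct a).

Lemma sat_gen {Y : Type} (act' : Y -> R -> Y)
  (actA' : forall y r r', act' (act' y r) r' = act' (act' y r') (op r r'))
  (a b : tot K Y R) : face_rel act' op a b ->
  [/\ mf1 act' (cy a) (cs a) (pat a) = mf1 act' (cy b) (cs b) (pat b),
      mf2 op (cs a) (pat a) = mf2 op (cs b) (pat b) &
      closeseq eps (ct a) (tg (pat a) ts) = closeseq eps (ct b) (tg (pat b) ts)].
Proof.
move=> /face_data [sa [sb [r [e [hcsb hcya hcsa hctb hsa]]]]].
have hpb : pat b = ins (size sa) (Some e) (pat a).
  by rewrite /pat hctb map_ins (cls_nat eps_gt0 eps_le).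
have hs : size sa = size (take (size sa) (pat a)).
  by rewrite size_take size_map; case: ltnP => //; lia.
split.
- by rewrite hpb hcsb /ins (mf1_face actA') // -hcya -hcsa cat_take_drop.
- by rewrite hpb hcsb /ins (mf2_face opA) // -hcsa cat_take_drop.
- apply: propext; rewrite hpb hctb tg_ins; last by rewrite size_map; exact: hsa.
  apply: iff_sym; apply: (closeseq_ins eps_gt0 eps_le) => //.
    by rewrite size_tg /pat size_map.
  by rewrite subrr normr0.
Qed.

End Sat.

Section Main.
Context (K : realType) (X R : Type) (op : R -> R -> R) (act : X -> R -> X)
  (p : X -> R) (ainv : X -> R -> X).
Hypothesis opA : forall x y z, op (op x y) z = op (op x z) (op y z).
Hypothesis opinj : forall r, injective (op^~ r).
Hypothesis actA : forall y r r', act (act y r) r' = act (act y r') (op r r').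
Hypothesis ainvK : forall r, cancel (act^~ r) (ainv^~ r).
Hypothesis ainvK' : forall r, cancel (ainv^~ r) (act^~ r).
Hypothesis pact : forall x r, p (act x r) = op (p x) r.

Notation TB := (tot K R R).
Notation TE := (tot K X R).
Notation QB := (realization K op op).
Notation QE := (realization K act op).
Notation rstB := (clos_refl_sym_trans TB (face_rel op op)).
Notation rstE := (clos_refl_sym_trans TE (face_rel act op)).

Lemma tot_map_face (a b : TE) : face_rel act op a b ->
  face_rel op op (tot_map p a) (tot_map p b).
Proof.
move=> [n [c [i [e [ta [tb [-> [-> htb]]]]]]]].
exists n, (p c.1, c.2), i, e, ta, tb; split => //.
by case: e {htb}; rewrite /tot_map /cells_map /face /= ?pact.
Qed.

Lemma tot_map_rst (a b : TE) : rstE a b -> rstB (tot_map p a) (tot_map p b).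
Proof. exact: (@rst_map _ _ (face_rel act op) (face_rel op op) (tot_map p) tot_map_face). Qed.

Lemma pi_tot_map (a : TE) :
  \pi_QB (tot_map p (repr (\pi_QE a))) = \pi_QB (tot_map p a).
Proof. by apply/pi_eqP; apply: tot_map_rst; apply: repr_rel. Qed.

Definition ul (x : X) (l : seq R) : X := foldr (fun r acc => ainv acc r) x l.

Lemma ulK z l : ul (foldl act z l) l = z.
Proof. by elim: l z => [|r l IH] z //=; rewrite IH ainvK. Qed.

Lemma ulK' x l : foldl act (ul x l) l = x.
Proof. by elim: l x => [|r l IH] x //=; rewrite ainvK' IH. Qed.

Lemma p_foldl z l : p (foldl act z l) = foldl op (p z) l.
Proof. by elim: l z => [|r l IH] z //=; rewrite IH pact. Qed.

Lemma foldl_op_inj l : injective (fun y => foldl op y l).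
Proof. by elim: l => [|r l IH] y y' //= /IH /opinj. Qed.

Context (eps : K) (ts : seq K) (ystar : R) (sstar : seq R).
Hypothesis eps_gt0 : 0 < eps.
Hypothesis eps_le : eps <= 4^-1.
Hypothesis ts_ok : all (fun x => (2 * eps < x) && (x < 1 - 2 * eps)) ts.
Hypothesis sstar_size : size sstar = size ts.

Notation pat := (pat eps).

Definition PB (a : TB) : Prop :=
  [/\ mf1 op (cy a) (cs a) (pat a) = ystar, mf2 op (cs a) (pat a) = sstar &
      closeseq eps (ct a) (tg (pat a) ts)].

Lemma PB_sat (a b : TB) : rstB a b -> PB a = PB b.
Proof.
apply: rst_eq => {}a {}b hab.
have [h1 h2 h3] := sat_gen opA ts eps_gt0 eps_le opA hab.
by rewrite /PB h1 h2 h3.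
Qed.

Definition QX (x : X) (e : TE) : Prop :=
  PB (tot_map p e) /\ mf1 act (cy e) (cs e) (pat e) = x.

Lemma QX_sat x (a b : TE) : rstE a b -> QX x a = QX x b.
Proof.
move=> hab; rewrite /QX (PB_sat (tot_map_rst hab)).
congr (_ /\ _); move: a b hab; apply: rst_eq => a b hab.
have [h1 _ _] := sat_gen opA ts eps_gt0 eps_le actA hab.
by rewrite h1.
Qed.

Definition liftc (x : X) (c : cells R R) (pt : seq (option bool)) : cells X R :=
  existT _ (projT1 c) (ul x (ones (val (projT2 c).2) pt), (projT2 c).2).

Definition lift (x : X) (a : TB) : TE :=
  existT (fun c => cubeT K (projT1 c)) (liftc x (projT1 a) (pat a)) (projT2 a).

Lemma existT_cell_eq {Y : Type} n (y y' : Y) (s : n.-tuple R) (t : cubeT K n) :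
  y = y' -> existT (fun c => cubeT K (projT1 c)) (existT (fun n => (Y * n.-tuple R)%type) n (y, s)) t
  = existT (fun c => cubeT K (projT1 c)) (existT (fun n => (Y * n.-tuple R)%type) n (y', s)) t.
Proof. by move=> ->. Qed.

Lemma lift_face x (a b : TB) : face_rel op op a b -> face_rel act op (lift x a) (lift x b).
Proof.
move=> [n [c [i [e [ta [tb [ha [hb htb]]]]]]]]; subst a b.
have /= [hcsb hcya hcsa hctb hsa] := @face_data_of K R R op op n c i e ta tb htb.
set a := existT _ (face op op c i e) ta.
set b := existT _ (existT _ n.+1 c) tb.
have hpb : pat b = ins (size (take i (val c.2))) (Some e) (pat a).
  by rewrite /pat hctb map_ins (cls_nat eps_gt0 eps_le).
set z := ul x (ones (cs b) (pat b)).
have hl : ul x (ones (cs a) (pat a)) = fc1 act z (tnth c.2 i) e.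
  have : mf1 act z (cs b) (pat b) = x by rewrite /mf1 ulK'.
  rewrite hpb hcsb /ins (mf1_face actA); last first.
    have hia : (i <= size (pat a))%N by rewrite /pat size_map size_ct -ltnS.
    have hic : (i <= size (val c.2))%N by rewrite size_tuple ltnW.
    by rewrite (size_takel hic) (size_takel hia).
  by rewrite cat_take_drop -hcsa /mf1 => <-; rewrite ulK.
exists n, (z, c.2), i, e, ta, tb; split; last by split.
by move: hl; rewrite /a; case: (e) => hl; apply: existT_cell_eq; exact: hl.
Qed.

Lemma lift_rst x (a b : TB) : rstB a b -> rstE (lift x a) (lift x b).
Proof. exact: (@rst_map _ _ (face_rel op op) (face_rel act op) (lift x) (@lift_face x)). Qed.

Lemma pi_lift x (a : TB) :
  \pi_QE (lift x (repr (\pi_QB a))) = \pi_QE (lift x a).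
Proof. by apply/pi_eqP; apply: lift_rst; apply: repr_rel. Qed.

Lemma lift_tot x (a : TB) : p x = ystar -> PB a -> tot_map p (lift x a) = a.
Proof.
case: a => [[n [y s]] t] hx [h1 _ _].
apply: existT_cell_eq; apply: (@foldl_op_inj (ones (val s) (pat (existT _ (existT _ n (y, s)) t)))).
by rewrite -p_foldl ulK' hx -h1.
Qed.

Lemma lift_QX x (a : TB) : p x = ystar -> PB a -> QX x (lift x a).
Proof.
move=> hx hP; split; first by rewrite lift_tot.
exact: ulK'.
Qed.

Lemma lift_of x (e : TE) : QX x e -> lift x (tot_map p e) = e.
Proof.
case: e => [[n [z s]] t] [_ h].
apply: existT_cell_eq; rewrite -h; exact: ulK.
Qed.

Lemma QX_label (e : TE) : PB (tot_map p e) ->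
  p (mf1 act (cy e) (cs e) (pat e)) = ystar.
Proof. by case=> h _ _; rewrite /mf1 p_foldl -h. Qed.

Lemma open_box n (v : seq K) :
  open [set t : cubeT K n | closeseq eps (vals (set_val t)) v].
Proof.
have -> : [set t : cubeT K n | closeseq eps (vals (set_val t)) v] =
          set_val @^-1` (ball (\row_k nth 0 v k) eps).
  apply/seteqP; split => t /=.
  - move=> h; split => // i j; rewrite (ord1 i) mxE.
    have := h j; rewrite size_vals nth_vals => /(_ (ltn_ord j)).
    by rewrite distrC.
  - move=> [_ h] k; rewrite size_vals => hk; have := h ord0 (Ordinal hk).
    by rewrite mxE (nth_vals _ (Ordinal hk)) distrC.
have := @initial_continuous _ _ (set_val : cubeT K n -> 'rV[K]_n).
move/continuousP; apply; exact: ball_open.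
Qed.

Lemma open_const (T : topologicalType) (P : Prop) : open [set _ : T | P].
Proof.
case: (pselect P) => h.
  by rewrite (_ : [set _ | P] = setT); [exact: openT|apply/seteqP; split].
by rewrite (_ : [set _ | P] = set0); [exact: open0|apply/seteqP; split].
Qed.

Lemma open_slice n (G : seq (option bool) -> set (cubeT K n)) :
  (forall pt, open (G pt)) ->
  (forall pt t, G pt t -> size pt = n /\ (count_mem None pt <= size ts)%N) ->
  open [set t : cubeT K n | G (map (cls eps) (vals (set_val t))) t /\ closeseq eps (vals (set_val t)) (tg (map (cls eps) (vals (set_val t))) ts)].
Proof.
move=> H1 H2.
have -> : [set t : cubeT K n | G (map (cls eps) (vals (set_val t))) t /\ closeseq eps (vals (set_val t)) (tg (map (cls eps) (vals (set_val t))) ts)] =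
  \bigcup_(pt in setT) (G pt `&` [set t | closeseq eps (vals (set_val t)) (tg pt ts)]).
  apply/seteqP; split => t /=.
  - by move=> [hG hc]; exists (map (cls eps) (vals (set_val t))).
  - move=> [pt _ [hG hc]]; have [hs hcnt] := H2 pt t hG.
    have e : map (cls eps) (vals (set_val t)) = pt.
      by apply: (classify_close eps_gt0 eps_le ts_ok) => //; rewrite size_vals.
    by rewrite e.
apply: bigcup_open => pt _; apply: openI => //; exact: open_box.
Qed.

Lemma count_ok (s : seq R) pt : size s = size pt -> mf2 op s pt = sstar ->
  (count_mem None pt <= size ts)%N.
Proof. by move=> hs h; rewrite -sstar_size -h size_mf2. Qed.

Lemma open_PB_slice (c : cells R R) :
  open [set t : cubeT K (projT1 c) | PB (existT _ c t)].
Proof.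
case: c => n [y s] /=.
pose G (pt : seq (option bool)) := [set _ : cubeT K n |
  [/\ mf1 op y (val s) pt = ystar, mf2 op (val s) pt = sstar & size pt = n]].
have -> : [set t : cubeT K n | PB (existT _ (existT _ n (y, s)) t)] =
  [set t : cubeT K n | G (map (cls eps) (vals (set_val t))) t /\
     closeseq eps (vals (set_val t)) (tg (map (cls eps) (vals (set_val t))) ts)].
  apply/seteqP; split => t /=.
    by case=> h1 h2 h3; split => //; split => //; rewrite size_map size_vals.
  by case=> [[h1 h2 h3] h4]; split.
apply: open_slice => [pt|pt t [_ h2 h3]]; first exact: open_const.
by split => //; apply: (count_ok _ h2); rewrite size_tuple.
Qed.

Lemma open_PB : open [set a : TB | PB a].
Proof. by apply/sigT_openP => c; exact: open_PB_slice. Qed.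

Definition UB : set QB := [set u | PB (repr u)].

Lemma pre_UB : \pi_QB @^-1` UB = [set a | PB a].
Proof. by apply/seteqP; split => a /=; rewrite /UB /= (PB_sat (@repr_rel K R R op op a)). Qed.

Lemma open_UB : open UB.
Proof. by rewrite /open /= /quotient_open pre_UB; exact: open_PB. Qed.

Definition W (x : X) : set QE := [set e | QX x (repr e)].

Lemma pre_W x : \pi_QE @^-1` W x = [set e | QX x e].
Proof. by apply/seteqP; split => a /=; rewrite /W /= (QX_sat x (@repr_rel K X R act op a)). Qed.

Lemma open_W x : open (W x).
Proof.
rewrite /open /= /quotient_open pre_W; apply/sigT_openP => c.
case: c => n [z s] /=.
pose G (pt : seq (option bool)) := [set _ : cubeT K n |
  [/\ mf1 op (p z) (val s) pt = ystar, mf2 op (val s) pt = sstar, size pt = n &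
      mf1 act z (val s) pt = x]].
have -> : existT (fun c => cubeT K (projT1 c)) (existT _ n (z, s)) @^-1` [set e | QX x e] =
  [set t : cubeT K n | G (map (cls eps) (vals (set_val t))) t /\
     closeseq eps (vals (set_val t)) (tg (map (cls eps) (vals (set_val t))) ts)].
  apply/seteqP; split => t /=.
    by case=> [[h1 h2 h3] h4]; split => //; split => //; rewrite size_map size_vals.
  by case=> [[h1 h2 h3 h4] h5]; split.
apply: open_slice => [pt|pt t [_ h2 h3 _]]; first exact: open_const.
by split => //; apply: (count_ok _ h2); rewrite size_tuple.
Qed.

Lemma f_cont : continuous (realization_map K act op op p).
Proof.
apply/continuousP => O hO; rewrite /open /= /quotient_open.
have -> : \pi_QE @^-1` (realization_map K act op op p @^-1` O) =
          tot_map p @^-1` (\pi_QB @^-1` O).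
  by apply/seteqP; split => e /=; rewrite /realization_map pi_tot_map.
apply/sigT_openP => c.
have hO' : open (\pi_QB @^-1` O) := hO.
by move/sigT_openP: hO' => /(_ (cells_map p c)).
Qed.

Definition g (x : X) (u : QB) : QE := \pi_QE (lift x (repr u)).

Lemma g_cont x : {within UB, continuous (g x)}.
Proof.
rewrite continuous_open_subspace; last exact: open_UB.
apply/continuous_inP; first exact: open_UB.
move=> O hO; rewrite /open /= /quotient_open.
have -> : \pi_QB @^-1` (UB `&` g x @^-1` O) =
          [set a | PB a /\ (\pi_QE @^-1` O) (lift x a)].
  apply/seteqP; split => a /=;
  by rewrite /UB /g /= (PB_sat (@repr_rel K R R op op a)) pi_lift.
apply/sigT_openP => c; case: c => n [y s] /=.
pose G (pt : seq (option bool)) := [set t : cubeT K n |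
  [/\ mf1 op y (val s) pt = ystar, mf2 op (val s) pt = sstar & size pt = n] /\
  (\pi_QE @^-1` O) (existT (fun c => cubeT K (projT1 c))
        (liftc x (existT _ n (y, s)) pt) t)].
have -> : existT (fun c => cubeT K (projT1 c)) (existT _ n (y, s)) @^-1`
     [set a | PB a /\ (\pi_QE @^-1` O) (lift x a)] =
  [set t : cubeT K n | G (map (cls eps) (vals (set_val t))) t /\
     closeseq eps (vals (set_val t)) (tg (map (cls eps) (vals (set_val t))) ts)].
  apply/seteqP; split => t /=.
    by case=> [[h1 h2 h3] h4]; split => //; split => //; split => //;
       rewrite size_map size_vals.
  by case=> [[[h1 h2 h3] h4] h5]; split.
apply: open_slice => [pt|pt t [[_ h2 h3] _]].
  apply: openI; first exact: open_const.
  have hO' : open (\pi_QE @^-1` O) := hO.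
  by move/sigT_openP: hO' => /(_ (liftc x (existT _ n (y, s)) pt)).
by split => //; apply: (count_ok _ h2); rewrite size_tuple.
Qed.

Lemma homeo x : p x = ystar -> homeo_onto (realization_map K act op op p) (W x) UB.
Proof.
move=> hx; split; first exact: continuous_subspaceT f_cont.
exists (g x); split; [|split; [|exact: g_cont]].
- move=> e We; have hPB : PB (tot_map p (repr e)) := We.1.
  split.
    rewrite /UB /= /realization_map.
    by rewrite (PB_sat (@repr_rel K R R op op _)).
  by rewrite /g /realization_map pi_lift lift_of // reprK.
- move=> u Uu; have hP : PB (repr u) := Uu.
  split.
    rewrite /W /g /= (QX_sat x (@repr_rel K X R act op _)).
    exact: lift_QX.
  by rewrite /realization_map /g pi_tot_map lift_tot // reprK.
Qed.

Lemma evenly : evenly_covered (realization_map K act op op p) UB.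
Proof.
exists [set A | exists2 x, p x = ystar & A = W x].
split; [|split; [|split]].
- by move=> A [x _ ->]; exact: open_W.
- move=> A A' [x _ ->] [x' _ ->] [e [h1 h2]].
  have -> // : x = x'.
  by case: h1 => _ <-; case: h2 => _ <-.
- apply/seteqP; split => e /=.
  + move=> hU.
    have hP : PB (tot_map p (repr e)).
      by move: hU; rewrite /UB /= /realization_map (PB_sat (@repr_rel K R R op op _)).
    exists (W (mf1 act (cy (repr e)) (cs (repr e)) (pat (repr e)))).
      by exists (mf1 act (cy (repr e)) (cs (repr e)) (pat (repr e))) => //; exact: QX_label.
    by split.
  + move=> [A [x hx ->] We].
    rewrite /UB /= /realization_map (PB_sat (@repr_rel K R R op op _)).
    exact: We.1.
- by move=> A [x hx ->]; exact: homeo.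
Qed.

End Main.

Section Base.
Context (K : realType) (R : Type) (op : R -> R -> R).

Lemma vals_cube n (t : cubeT K n) v : v \in vals (set_val t) -> 0 <= v <= 1.
Proof.
move=> /mapP [k _ ->]; have := valP t; rewrite set_valE.
by move/set_mem => /(_ k).
Qed.

Lemma base_close (eps : K) (u : seq K) : 0 < eps ->
  (forall v, v \in u -> 0 <= v <= 1) ->
  closeseq eps u (tg (map (cls eps) u) [seq v <- u | cls eps v == None]).
Proof.
move=> he0; elim: u => [|v u IH] hu k //=.
have hv : 0 <= v <= 1 by apply: hu; rewrite in_cons eqxx.
have IH' : closeseq eps u (tg [seq cls eps i | i <- u] [seq v <- u | cls eps v == None]).
  by apply: IH => w hw; apply: hu; rewrite in_cons hw orbT.
case: k => [|k] hk /=.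
  move: hv; rewrite /cls; case: ifP => h1.
    by rewrite /= subr0 => /andP [h0 _]; rewrite ger0_norm.
  case: ifP => h2 /= /andP [h0 h01].
    by rewrite ltr_norml; apply/andP; split; lra.
  by rewrite subrr normr0.
move: (IH' k hk); rewrite /cls; case: ifP => h1 //; case: ifP => h2 //.
Qed.

Lemma base_data (a0 : tot K R R) : exists (eps : K) (ts : seq K),
  [/\ 0 < eps, eps <= 4^-1, all (fun x => (2 * eps < x) && (x < 1 - 2 * eps)) ts,
      size (mf2 op (cs a0) (pat eps a0)) = size ts &
      closeseq eps (ct a0) (tg (pat eps a0) ts)].
Proof.
have [eps [he0 [he1 hint]]] := exists_eps (ct a0).
have hcube : forall v, v \in ct a0 -> 0 <= v <= 1 by move=> v; exact: vals_cube.
exists eps, [seq v <- ct a0 | cls eps v == None]; split => //.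
- apply/allP => v; rewrite mem_filter => /andP [hc hv].
  have /andP [v0 v1] := hcube v hv.
  move: hc; rewrite /cls; case: ifP => // h1; case: ifP => // h2 _.
  have [] := hint v hv; [lra|lra|move=> ? ?; apply/andP; split => //].
- rewrite size_mf2; last by rewrite /pat size_map size_cs size_ct.
  by rewrite size_filter /pat count_map.
- exact: base_close.
Qed.

End Base.

Theorem mainTheorem6 (K : realType) (X R : Type) (op : R -> R -> R)
  (act : X -> R -> X) (p : X -> R) :
  is_rack op ->
  is_rack_action op act ->
  (forall (x : X) (r : R), p (act x r) = op (p x) r) ->
  arcwise_connected K (realization K op op) ->
  locally_arcwise_connected K (realization K op op) ->
  covering_map (realization_map K act op op p).
Proof.
move=> [hbij hA] [abij aA] hp _ _.
have habij : forall r, exists g : X -> X, cancel (act^~ r) g /\ cancel g (act^~ r).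
  by move=> r; have [g h1 h2] := abij r; exists g.
have [G hG] := boolp.choice habij.
pose ainv x r := G r x.
have ainvK : forall r, cancel (act^~ r) (ainv^~ r) by move=> r; exact: (hG r).1.
have ainvK' : forall r, cancel (ainv^~ r) (act^~ r) by move=> r; exact: (hG r).2.
have opinj : forall r, injective (op^~ r) by move=> r; exact: bij_inj.
split; first exact: (f_cont hp).
move=> b.
have [eps [ts [he0 he1 hts hsz hcl]]] := base_data op (repr b).
pose ystar := mf1 op (cy (repr b)) (cs (repr b)) (pat eps (repr b)).
pose sstar := mf2 op (cs (repr b)) (pat eps (repr b)).
exists (@UB K R op eps ts ystar sstar); split.
  by apply: open_UB; first [exact: hA | exact: he0 | exact: he1 | exact: hts | exact: hsz].
split; first by [].
apply: (@evenly _ _ _ _ _ _ ainv).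
all: first [exact: hA | exact: opinj | exact: aA | exact: ainvK | exact: ainvK' | exact: hp | exact: he0 | exact: he1 | exact: hts | exact: hsz].
Qed.
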